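(* Every proof of a formula $F$ in $\mathsf{PA}^\exists$ can be transformed into a proof of $F$ of the following form: there are proofs $\mathcal{D}_1,\dots,\mathcal{D}_n$ of $F$ that are purely intuitionistic (contain no application of the rule $\mathsf{EM}$, possibly with open assumptions), and the proof of $F$ is obtained from $\mathcal{D}_1,\dots,\mathcal{D}_n$ by repeated applications of the rule $\mathsf{EM}$ only, each with conclusion $F$.
   Context: $\mathsf{PA}^\exists$ is presented as a natural deduction system for arithmetic over $0,\mathsf{S},+,\cdot,=$ whose formulas are $\exists$-translations (so no universal quantifier occurs and no $\forall$-rules are used), where the $\exists$-translation is: $F^\exists=F$ for atomic $F$; commuting with $\wedge,\vee,\to,\exists$; $(\forall xF)^\exists=\neg\exists x\neg F^\exists$. Its rules are the intuitionistic natural deduction rules for $\wedge,\vee,\to,\exists,\bot$, the ($\exists$-translated) arithmetical axioms, the translated induction rule $\mathrm{Ind}^\exists$: from $\Gamma\vdash A(0)$ and $\Gamma\vdash\neg\exists\alpha\neg(A(\alpha)\to A(\mathsf{S}\alpha))$ infer $\Gamma\vdash\neg\exists\alpha\neg A(\alpha)$, and the classical rule $\mathsf{EM}$: for any formulas $A,C$, from $\Gamma,A\vdash C$ and $\Gamma,\neg A\vdash C$ infer $\Gamma\vdash C$ (discharging $A$ and $\neg A$). *)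

(* Defs.v *)
From Stdlib Require Import List Arith.
Import ListNotations.

(* Terms over 0, S, +, * ; variables are de Bruijn indices. *)
Inductive term : Type :=
| tvar : nat -> term
| tzero : term
| tsucc : term -> term
| tplus : term -> term -> term
| tmult : term -> term -> term.

(* Formulas of PA^exists: no universal quantifier. *)
Inductive form : Type :=
| fEq : term -> term -> form
| fBot : form
| fAnd : form -> form -> form
| fOr : form -> form -> form
| fImp : form -> form -> form
| fEx : form -> form.

Definition fNot (A : form) : form := fImp A fBot.

(* The exists-translation of (forall x A) when A is already translated. *)
Definition fAllT (A : form) : form := fNot (fEx (fNot A)).

Fixpoint lift_t (c : nat) (t : term) : term :=
  match t with
  | tvar n => if c <=? n then tvar (S n) else tvar n
  | tzero => tzero
  | tsucc t1 => tsucc (lift_t c t1)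
  | tplus t1 t2 => tplus (lift_t c t1) (lift_t c t2)
  | tmult t1 t2 => tmult (lift_t c t1) (lift_t c t2)
  end.

Fixpoint lift_f (c : nat) (A : form) : form :=
  match A with
  | fEq t1 t2 => fEq (lift_t c t1) (lift_t c t2)
  | fBot => fBot
  | fAnd A1 A2 => fAnd (lift_f c A1) (lift_f c A2)
  | fOr A1 A2 => fOr (lift_f c A1) (lift_f c A2)
  | fImp A1 A2 => fImp (lift_f c A1) (lift_f c A2)
  | fEx A1 => fEx (lift_f (S c) A1)
  end.

Fixpoint subst_t (k : nat) (u : term) (t : term) : term :=
  match t with
  | tvar n => if n =? k then u else if k <? n then tvar (pred n) else tvar n
  | tzero => tzero
  | tsucc t1 => tsucc (subst_t k u t1)
  | tplus t1 t2 => tplus (subst_t k u t1) (subst_t k u t2)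
  | tmult t1 t2 => tmult (subst_t k u t1) (subst_t k u t2)
  end.

Fixpoint subst_f (k : nat) (u : term) (A : form) : form :=
  match A with
  | fEq t1 t2 => fEq (subst_t k u t1) (subst_t k u t2)
  | fBot => fBot
  | fAnd A1 A2 => fAnd (subst_f k u A1) (subst_f k u A2)
  | fOr A1 A2 => fOr (subst_f k u A1) (subst_f k u A2)
  | fImp A1 A2 => fImp (subst_f k u A1) (subst_f k u A2)
  | fEx A1 => fEx (subst_f (S k) (lift_t 0 u) A1)
  end.

Definition inst (A : form) (t : term) : form := subst_f 0 t A.

(* A(S alpha), alpha = variable 0, other free variables unchanged. *)
Definition instS (A : form) : form := subst_f 0 (tsucc (tvar 0)) (lift_f 1 A).

Definition v0 := tvar 0.
Definition v1 := tvar 1.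
Definition v2 := tvar 2.

(* exists-translations of the universal closures of the arithmetical axioms
   (equality axioms and the Peano axioms for 0, S, +, * ). *)
Inductive PAaxiom : form -> Prop :=
| ax_refl : PAaxiom (fAllT (fEq v0 v0))
| ax_sym : PAaxiom (fAllT (fAllT (fImp (fEq v1 v0) (fEq v0 v1))))
| ax_trans : PAaxiom (fAllT (fAllT (fAllT
      (fImp (fEq v2 v1) (fImp (fEq v1 v0) (fEq v2 v0))))))
| ax_congS : PAaxiom (fAllT (fAllT (fImp (fEq v1 v0) (fEq (tsucc v1) (tsucc v0)))))
| ax_succ0 : PAaxiom (fAllT (fNot (fEq (tsucc v0) tzero)))
| ax_succinj : PAaxiom (fAllT (fAllT (fImp (fEq (tsucc v1) (tsucc v0)) (fEq v1 v0))))
| ax_plus0 : PAaxiom (fAllT (fEq (tplus v0 tzero) v0))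
| ax_plusS : PAaxiom (fAllT (fAllT (fEq (tplus v1 (tsucc v0)) (tsucc (tplus v1 v0)))))
| ax_mult0 : PAaxiom (fAllT (fEq (tmult v0 tzero) tzero))
| ax_multS : PAaxiom (fAllT (fAllT (fEq (tmult v1 (tsucc v0)) (tplus (tmult v1 v0) v1)))).

Inductive deriv : list form -> form -> Type :=
| d_hyp : forall G A, In A G -> deriv G A
| d_ax : forall G A, PAaxiom A -> deriv G A
| d_andI : forall G A B, deriv G A -> deriv G B -> deriv G (fAnd A B)
| d_andE1 : forall G A B, deriv G (fAnd A B) -> deriv G A
| d_andE2 : forall G A B, deriv G (fAnd A B) -> deriv G B
| d_orI1 : forall G A B, deriv G A -> deriv G (fOr A B)
| d_orI2 : forall G A B, deriv G B -> deriv G (fOr A B)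
| d_orE : forall G A B C, deriv G (fOr A B) -> deriv (A :: G) C ->
    deriv (B :: G) C -> deriv G C
| d_impI : forall G A B, deriv (A :: G) B -> deriv G (fImp A B)
| d_impE : forall G A B, deriv G (fImp A B) -> deriv G A -> deriv G B
| d_botE : forall G A, deriv G fBot -> deriv G A
| d_exI : forall G A t, deriv G (inst A t) -> deriv G (fEx A)
| d_exE : forall G A C, deriv G (fEx A) ->
    deriv (A :: map (lift_f 0) G) (lift_f 0 C) -> deriv G C
    (* eigenvariable = index 0, fresh for G and C by lifting *)
| d_ind : forall G A, deriv G (inst A tzero) ->
    deriv G (fNot (fEx (fNot (fImp A (instS A))))) ->
    deriv G (fNot (fEx (fNot A)))
| d_EM : forall G A C, deriv (A :: G) C -> deriv (fNot A :: G) C -> deriv G C.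

Fixpoint em_free {G A} (d : deriv G A) : Prop :=
  match d with
  | d_hyp _ _ _ => True
  | d_ax _ _ _ => True
  | d_andI _ _ _ d1 d2 => em_free d1 /\ em_free d2
  | d_andE1 _ _ _ d1 => em_free d1
  | d_andE2 _ _ _ d1 => em_free d1
  | d_orI1 _ _ _ d1 => em_free d1
  | d_orI2 _ _ _ d1 => em_free d1
  | d_orE _ _ _ _ d1 d2 d3 => em_free d1 /\ em_free d2 /\ em_free d3
  | d_impI _ _ _ d1 => em_free d1
  | d_impE _ _ _ d1 d2 => em_free d1 /\ em_free d2
  | d_botE _ _ d1 => em_free d1
  | d_exI _ _ _ d1 => em_free d1
  | d_exE _ _ _ d1 d2 => em_free d1 /\ em_free d2
  | d_ind _ _ d1 d2 => em_free d1 /\ em_free d2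
  | d_EM _ _ _ _ _ => False
  end.

Inductive em_tree : forall G C, deriv G C -> Prop :=
| emt_leaf : forall G C (d : deriv G C), em_free d -> em_tree G C d
| emt_node : forall G A C (d1 : deriv (A :: G) C) (d2 : deriv (fNot A :: G) C),
    em_tree (A :: G) C d1 -> em_tree (fNot A :: G) C d2 ->
    em_tree G C (d_EM G A C d1 d2).

(* Main.v *)
Require Import Defs.
From Stdlib Require Import List.
Import ListNotations.

Definition Iv G A := exists d : deriv G A, em_free d.
Definition T G A := exists d : deriv G A, em_tree G A d.

Lemma incl_cc {X} (a : X) l l' : incl l l' -> incl (a :: l) (a :: l').
Proof. intros H. apply incl_cons; [left; reflexivity | apply incl_tl; exact H]. Qed.

Lemma incl_t1 {X} (a : X) l : incl l (a :: l).
Proof. apply incl_tl, incl_refl. Qed.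

Lemma wkI : forall G A (d : deriv G A), em_free d -> forall G', incl G G' -> Iv G' A.
Proof.
  induction d; simpl; intros He G' Hi.
  - exists (d_hyp G' A (Hi _ i)); exact I.
  - exists (d_ax G' A p); exact I.
  - destruct He as [e1 e2]. destruct (IHd1 e1 G' Hi) as [x1 y1], (IHd2 e2 G' Hi) as [x2 y2].
    exists (d_andI _ _ _ x1 x2); simpl; auto.
  - destruct (IHd He G' Hi) as [x y]. exists (d_andE1 _ _ _ x); simpl; auto.
  - destruct (IHd He G' Hi) as [x y]. exists (d_andE2 _ _ _ x); simpl; auto.
  - destruct (IHd He G' Hi) as [x y]. exists (d_orI1 _ _ _ x); simpl; auto.
  - destruct (IHd He G' Hi) as [x y]. exists (d_orI2 _ _ _ x); simpl; auto.
  - destruct He as [e1 [e2 e3]].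
    destruct (IHd1 e1 G' Hi) as [x1 y1], (IHd2 e2 _ (incl_cc A _ _ Hi)) as [x2 y2],
      (IHd3 e3 _ (incl_cc B _ _ Hi)) as [x3 y3].
    exists (d_orE _ _ _ _ x1 x2 x3); simpl; auto.
  - destruct (IHd He _ (incl_cc A _ _ Hi)) as [x y]. exists (d_impI _ _ _ x); simpl; auto.
  - destruct He as [e1 e2]. destruct (IHd1 e1 G' Hi) as [x1 y1], (IHd2 e2 G' Hi) as [x2 y2].
    exists (d_impE _ _ _ x1 x2); simpl; auto.
  - destruct (IHd He G' Hi) as [x y]. exists (d_botE _ _ x); simpl; auto.
  - destruct (IHd He G' Hi) as [x y]. exists (d_exI _ _ _ x); simpl; auto.
  - destruct He as [e1 e2]. destruct (IHd1 e1 G' Hi) as [x1 y1],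
      (IHd2 e2 _ (incl_cc A _ _ (incl_map (lift_f 0) Hi))) as [x2 y2].
    exists (d_exE _ _ _ x1 x2); simpl; auto.
  - destruct He as [e1 e2]. destruct (IHd1 e1 G' Hi) as [x1 y1], (IHd2 e2 G' Hi) as [x2 y2].
    exists (d_ind _ _ x1 x2); simpl; auto.
  - destruct He.
Qed.

Lemma leafT G A (d : deriv G A) : em_free d -> T G A.
Proof. intros H. exists d. now constructor. Qed.

Lemma nodeT G A C : T (A :: G) C -> T (fNot A :: G) C -> T G C.
Proof.
  intros [d1 e1] [d2 e2]. exists (d_EM _ _ _ d1 d2). now constructor.
Qed.

Lemma wkT G A : T G A -> forall G', incl G G' -> T G' A.
Proof.
  intros [d Ht]. induction Ht; intros G' Hi.
  - destruct (wkI _ _ d H G' Hi) as [x y]. exact (leafT _ _ x y).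
  - apply nodeT with A; [apply IHHt1 | apply IHHt2]; apply incl_cc; exact Hi.
Qed.

Lemma liftT G A C : T G A -> (forall G', incl G G' -> Iv G' A -> T G' C) -> T G C.
Proof.
  intros [d Ht]. revert C. induction Ht; intros C' Hk.
  - apply Hk; [apply incl_refl | exists d; exact H].
  - apply nodeT with A.
    + apply IHHt1. intros G' i x. apply Hk; auto. eapply incl_tran; [apply incl_t1 | exact i].
    + apply IHHt2. intros G' i x. apply Hk; auto. eapply incl_tran; [apply incl_t1 | exact i].
Qed.

Lemma collapse G : T G fBot -> Iv G fBot.
Proof.
  intros [d Ht]. remember fBot as b eqn:Eb. induction Ht; subst.
  - exists d; exact H.
  - destruct (IHHt1 eq_refl) as [x1 y1], (IHHt2 eq_refl) as [x2 y2].
    exists (d_impE G (fNot A) fBot (d_impI G (fNot A) fBot x2) (d_impI G A fBot x1)).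
    simpl; auto.
Qed.

Lemma classical G C : Iv (fNot C :: G) fBot -> T G C.
Proof.
  intros [d e]. apply nodeT with C.
  - apply leafT with (d_hyp _ _ (in_eq _ _)); exact I.
  - apply leafT with (d_botE _ _ d); exact e.
Qed.

Theorem mainTheorem10 :
  forall (G : list form) (F : form) (d : deriv G F),
    exists d' : deriv G F, em_tree G F d'.
Proof.
  intros G F d. change (T G F). induction d.
  - apply leafT with (d_hyp _ _ i); exact I.
  - apply leafT with (d_ax _ _ p); exact I.
  - apply (liftT _ _ _ IHd1). intros G1 i1 [x1 y1].
    apply (liftT _ _ _ (wkT _ _ IHd2 _ i1)). intros G2 i2 [x2 y2].
    destruct (wkI _ _ x1 y1 _ i2) as [x1' y1'].
    apply leafT with (d_andI _ _ _ x1' x2); simpl; auto.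
  - apply (liftT _ _ _ IHd). intros G1 i1 [x y].
    apply leafT with (d_andE1 _ _ _ x); simpl; auto.
  - apply (liftT _ _ _ IHd). intros G1 i1 [x y].
    apply leafT with (d_andE2 _ _ _ x); simpl; auto.
  - apply (liftT _ _ _ IHd). intros G1 i1 [x y].
    apply leafT with (d_orI1 _ _ _ x); simpl; auto.
  - apply (liftT _ _ _ IHd). intros G1 i1 [x y].
    apply leafT with (d_orI2 _ _ _ x); simpl; auto.
  -
    apply classical. apply collapse.
    apply (liftT _ _ _ (wkT _ _ IHd1 _ (incl_t1 (fNot C) G))). intros G1 i1 [x1 y1].
    assert (i1' : incl G G1) by (eapply incl_tran; [apply incl_t1 | exact i1]).
    assert (HC : In (fNot C) G1) by (apply i1; left; reflexivity).
    assert (HA : Iv (A :: G1) fBot).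
    { apply collapse. apply (liftT _ _ _ (wkT _ _ IHd2 _ (incl_cc A _ _ i1'))).
      intros G2 i2 [x2 y2].
      apply leafT with (d_impE G2 C fBot (d_hyp _ _ (i2 _ (in_cons _ _ _ HC))) x2).
      simpl; auto. }
    assert (HB : Iv (B :: G1) fBot).
    { apply collapse. apply (liftT _ _ _ (wkT _ _ IHd3 _ (incl_cc B _ _ i1'))).
      intros G2 i2 [x2 y2].
      apply leafT with (d_impE G2 C fBot (d_hyp _ _ (i2 _ (in_cons _ _ _ HC))) x2).
      simpl; auto. }
    destruct HA as [xa ya], HB as [xb yb].
    apply leafT with (d_orE _ _ _ _ x1 xa xb); simpl; auto.
  -
    apply nodeT with A.
    + apply (liftT _ _ _ IHd). intros G1 i1 [x y].
      destruct (wkI _ _ x y (A :: G1) (incl_t1 A G1)) as [x' y'].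
      apply leafT with (d_impI _ _ _ x'); simpl; auto.
    + apply leafT with (d_impI _ A B (d_botE _ B (d_impE (A :: fNot A :: G) A fBot
         (d_hyp _ (fNot A) (in_cons _ _ _ (in_eq _ _))) (d_hyp _ A (in_eq _ _))))).
      simpl; auto.
  - apply (liftT _ _ _ IHd1). intros G1 i1 [x1 y1].
    apply (liftT _ _ _ (wkT _ _ IHd2 _ i1)). intros G2 i2 [x2 y2].
    destruct (wkI _ _ x1 y1 _ i2) as [x1' y1'].
    apply leafT with (d_impE _ _ _ x1' x2); simpl; auto.
  - apply (liftT _ _ _ IHd). intros G1 i1 [x y].
    apply leafT with (d_botE _ _ x); simpl; auto.
  - apply (liftT _ _ _ IHd). intros G1 i1 [x y].
    apply leafT with (d_exI _ _ _ x); simpl; auto.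
  -
    apply classical. apply collapse.
    apply (liftT _ _ _ (wkT _ _ IHd1 _ (incl_t1 (fNot C) G))). intros G1 i1 [x1 y1].
    assert (i1' : incl G G1) by (eapply incl_tran; [apply incl_t1 | exact i1]).
    assert (HC : In (fNot C) G1) by (apply i1; left; reflexivity).
    assert (HA : Iv (A :: map (lift_f 0) G1) fBot).
    { apply collapse.
      apply (liftT _ _ _ (wkT _ _ IHd2 _ (incl_cc A _ _ (incl_map (lift_f 0) i1')))).
      intros G2 i2 [x2 y2].
      assert (H2 : In (fImp (lift_f 0 C) fBot) G2).
      { apply i2. right. change (fImp (lift_f 0 C) fBot) with (lift_f 0 (fNot C)).
        apply in_map. exact HC. }
      apply leafT with (d_impE G2 (lift_f 0 C) fBot (d_hyp _ _ H2) x2).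
      simpl; auto. }
    destruct HA as [xa ya].
    apply leafT with (d_exE G1 A fBot x1 xa); simpl; auto.
  - apply (liftT _ _ _ IHd1). intros G1 i1 [x1 y1].
    apply (liftT _ _ _ (wkT _ _ IHd2 _ i1)). intros G2 i2 [x2 y2].
    destruct (wkI _ _ x1 y1 _ i2) as [x1' y1'].
    apply leafT with (d_ind _ _ x1' x2); simpl; auto.
  - apply nodeT with A; assumption.
Qed.
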